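(* Let $F$ be a $C^1$ function on $\mathbb R$ with $\lim_{x\to-\infty}F(x)=-1$ and $\lim_{x\to+\infty}F(x)=1$. If $f\in C^2(\mathbb T,\mathbb R)$ is non-degenerate, then $$\mathcal H^0(\{f=0\})=-\frac12\int_0^{2\pi}F'\Big(\frac{f'(x)}{f(x)}\Big)\Big(\frac{f'(x)}{f(x)}\Big)'\,dx,$$ where the integrand is defined at points with $f(x)\neq0$ and the integral is understood as the sum of the (improper) integrals over the finitely many open arcs between consecutive zeros of $f$.
   Context: $\mathbb T=\mathbb R/2\pi\mathbb Z$, functions on $\mathbb T$ are identified with $2\pi$-periodic functions on $\mathbb R$, and $\mathcal H^0(\{f=0\})$ is the number of zeros of $f$ in one period $[0,2\pi)$. Set $\eta_f(x):=\sqrt{f(x)^2+f'(x)^2}$; $f$ is non-degenerate if $\min_x\eta_f(x)>0$. *)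

(* Defs.v *)
From Stdlib Require Import Reals Lra List Sorting.Sorted.
From Coquelicot Require Import Coquelicot.
Open Scope R_scope.

Definition isC1 (F : R -> R) : Prop :=
  (forall x, ex_derive F x) /\ (forall x, continuous (Derive F) x).

Definition isC2 (f : R -> R) : Prop :=
  (forall x, ex_derive f x) /\ (forall x, ex_derive (Derive f) x) /\
  (forall x, continuous (Derive_n f 2) x).

(* f is 2*PI periodic (a function on the torus T) *)
Definition periodic2pi (f : R -> R) : Prop := forall x, f (x + 2 * PI) = f x.

Definition eta (f : R -> R) (x : R) : R := sqrt (f x ^ 2 + Derive f x ^ 2).

(* non-degenerate: min_x eta_f(x) > 0 (the min exists as eta_f is
   continuous and periodic; stated as a uniform positive lower bound) *)
Definition nondegenerate (f : R -> R) : Prop :=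
  exists c, 0 < c /\ forall x, c <= eta f x.

Definition zeros_list (f : R -> R) (zs : list R) : Prop :=
  Sorted Rlt zs /\ forall x, In x zs <-> (0 <= x < 2 * PI /\ f x = 0).

Fixpoint consec (a : R) (l : list R) : list (R * R) :=
  match l with
  | nil => nil
  | b :: l' => (a, b) :: consec b l'
  end.

(* open arcs between consecutive zeros, the last one wrapping around *)
Definition arcs (zs : list R) : list (R * R) :=
  match zs with
  | nil => nil
  | z :: l => consec z l ++ ((last l z, z + 2 * PI) :: nil)
  end.

Definition integrand (F f : R -> R) (x : R) : R :=
  let h := fun y => Derive f y / f y in
  Derive F (h x) * Derive h x.

Definition is_arc_integral (g : R -> R) (zs : list R) (I : R) : Prop :=
  match zs with
  | nil => is_RInt g 0 (2 * PI) I
  | _ :: _ => exists Is : list R,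
      Forall2 (fun ab J => is_RInt_gen g (at_right (fst ab)) (at_left (snd ab)) J)
              (arcs zs) Is
      /\ I = fold_right Rplus 0 Is
  end.

(* Main.v *)
Require Import Defs.
From Stdlib Require Import Reals Lra List Sorting.Sorted Rtopology Classical.
From Coquelicot Require Import Coquelicot.
Open Scope R_scope.

Definition hf (f : R -> R) := fun y => Derive f y / f y.

Lemma zero_deriv_bound f c z : (forall x, c <= eta f x) -> f z = 0 -> c <= Rabs (Derive f z).
Proof.
  intros H Hz. specialize (H z). unfold eta in H.
  replace (f z ^ 2 + Derive f z ^ 2) with (Rsqr (Derive f z)) in H
    by (rewrite Hz; unfold Rsqr; ring).
  rewrite sqrt_Rsqr_abs in H. exact H.
Qed.

Lemma C2_cont f x : isC2 f -> continuous f x.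
Proof. intros [H1 _]. exact (@ex_derive_continuous R_AbsRing R_NormedModule f x (H1 x)). Qed.
Lemma C2_cont1 f x : isC2 f -> continuous (Derive f) x.
Proof. intros [_ [H2 _]]. exact (@ex_derive_continuous R_AbsRing R_NormedModule _ x (H2 x)). Qed.
Lemma C2_cont2 f x : isC2 f -> continuous (Derive (Derive f)) x.
Proof. intros [_ [_ H3]]. exact (H3 x). Qed.

Lemma hf_derive f x : isC2 f -> f x <> 0 ->
  is_derive (hf f) x ((Derive (Derive f) x * f x - Derive f x * Derive f x) / f x ^ 2).
Proof.
  intros Hf Hx. destruct Hf as [H1 [H2 _]].
  apply is_derive_div; auto; apply Derive_correct; auto.
Qed.

Lemma nz_loc f x : isC2 f -> f x <> 0 -> locally x (fun y => f y <> 0).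
Proof.
  intros Hf Hx. pose proof (C2_cont f x Hf) as Hc.
  assert (He : 0 < Rabs (f x)) by (apply Rabs_pos_lt; auto).
  eapply filter_imp. 2: apply (proj1 (filterlim_locally _ _) Hc (mkposreal _ He)).
  intros y Hy. simpl in Hy. change (Rabs (f y - f x) < Rabs (f x)) in Hy.
  intro E. rewrite E in Hy. rewrite Rminus_0_l, Rabs_Ropp in Hy. lra.
Qed.

Lemma comp_derive G f x : isC1 G -> isC2 f -> f x <> 0 ->
  is_derive (fun y => G (hf f y)) x (integrand G f x).
Proof.
  intros [G1 G2] Hf Hx.
  pose proof (hf_derive f x Hf Hx) as Hd.
  assert (E : integrand G f x = scal (Derive (hf f) x) (Derive G (hf f x))).
  { unfold integrand, hf. change (scal ?a ?b) with (a * b). ring. }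
  rewrite E. apply (@is_derive_comp R_AbsRing R_NormedModule G (hf f) x). apply Derive_correct, G1.
  apply Derive_correct. eexists; eauto.
Qed.

Lemma integrand_cont G f x : isC1 G -> isC2 f -> f x <> 0 -> continuous (integrand G f) x.
Proof.
  intros HG Hf Hx.
  apply continuous_ext_loc with
    (fun y => Derive G (hf f y) * ((Derive (Derive f) y * f y - Derive f y * Derive f y) / f y ^ 2)).
  { eapply filter_imp. 2: apply (nz_loc f x Hf Hx).
    intros y Hy. unfold integrand. fold (hf f).
    rewrite (is_derive_unique _ _ _ (hf_derive f y Hf Hy)). reflexivity. }
  apply (continuous_mult (K:=R_AbsRing)).
  - apply (continuous_comp (hf f) (Derive G)).
    + apply (@ex_derive_continuous R_AbsRing R_NormedModule).
      eexists. apply hf_derive; auto.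
    + apply HG.
  - apply continuity_pt_filterlim.
    pose proof (proj2 (continuity_pt_filterlim _ _) (C2_cont f x Hf)) as c0.
    pose proof (proj2 (continuity_pt_filterlim _ _) (C2_cont1 f x Hf)) as c1.
    pose proof (proj2 (continuity_pt_filterlim _ _) (C2_cont2 f x Hf)) as c2.
    apply continuity_pt_div.
    + apply continuity_pt_minus; apply continuity_pt_mult; auto.
    + apply continuity_pt_mult; auto. apply continuity_pt_mult; auto. apply continuity_pt_const. intros a b; auto.
    + apply pow_nonzero; auto.
Qed.

Lemma ratio_half p q c : c <> 0 -> Rabs (p - c) < Rabs c / 3 -> Rabs (q - c) < Rabs c / 3 ->
  q <> 0 /\ p / q > 1/2.
Proof.
  intros Hc Hp Hq.
  destruct (Rlt_or_le 0 c) as [Hc'|Hc'].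
  - rewrite (Rabs_right c) in Hp, Hq by lra.
    apply Rabs_def2 in Hp. apply Rabs_def2 in Hq.
    assert (q > 0) by lra. split. lra.
    assert (p / q - 1/2 = (2*p - q) / (2*q)) by (field; lra).
    assert ((2*p - q)/(2*q) > 0) by (apply Rdiv_lt_0_compat; lra). lra.
  - rewrite (Rabs_left c) in Hp, Hq by lra.
    apply Rabs_def2 in Hp. apply Rabs_def2 in Hq.
    assert (q < 0) by lra. split. lra.
    assert (p / q - 1/2 = (q - 2*p) / (-(2*q))) by (field; lra).
    assert ((q - 2*p)/(-(2*q)) > 0) by (apply Rdiv_lt_0_compat; lra). lra.
Qed.

Lemma local_zero f z : isC2 f -> f z = 0 -> Derive f z <> 0 ->
  exists eps, 0 < eps /\ forall x, 0 < Rabs (x - z) < eps -> f x <> 0 /\ hf f x * (x - z) > 1/2.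
Proof.
  intros Hf Hz Hd.
  assert (He : 0 < Rabs (Derive f z) / 3) by (apply Rabs_pos_lt in Hd; lra).
  pose proof (proj1 (filterlim_locally _ _) (C2_cont1 f z Hf) (mkposreal _ He)) as [d Hdd].
  exists d. split. apply cond_pos. intros x Hx.
  destruct (MVT_gen f z x (Derive f)) as [xi [Hxi Hmvt]].
  { intros t _. apply Derive_correct. apply Hf. }
  { intros t _. apply continuity_pt_filterlim. apply C2_cont, Hf. }
  rewrite Hz, Rminus_0_r in Hmvt.
  assert (Bxi : Rabs (Derive f xi - Derive f z) < Rabs (Derive f z) / 3).
  { apply (Hdd xi). change (Rabs (xi - z) < d).
    destruct Hx as [_ Hx']. apply Rabs_def2 in Hx'.
    unfold Rmin, Rmax in Hxi. destruct (Rle_dec z x); apply Rabs_def1; lra. }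
  assert (Bx : Rabs (Derive f x - Derive f z) < Rabs (Derive f z) / 3).
  { apply (Hdd x). change (Rabs (x - z) < d). destruct Hx; lra. }
  destruct (ratio_half _ _ _ Hd Bx Bxi) as [Hq Hr].
  assert (Hxz : x - z <> 0) by (intro E; rewrite E, Rabs_R0 in Hx; lra).
  assert (fx : f x <> 0) by (rewrite Hmvt; apply Rmult_integral_contrapositive; auto).
  split; auto. unfold hf. rewrite Hmvt.
  replace (Derive f x / (Derive f xi * (x - z)) * (x - z)) with (Derive f x / Derive f xi) by (field; auto).
  exact Hr.
Qed.

Lemma lim_right f z : isC2 f -> f z = 0 -> Derive f z <> 0 ->
  filterlim (hf f) (at_right z) (Rbar_locally p_infty).
Proof.
  intros Hf Hz Hd. destruct (local_zero f z Hf Hz Hd) as [e [He H]].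
  intros P [M HM].
  assert (Hr : 0 < Rmin e (/ (2 * (Rabs M + 1)))).
  { apply Rmin_pos; auto. apply Rinv_0_lt_compat. pose proof (Rabs_pos M); lra. }
  exists (mkposreal _ Hr). intros x Hx Hzx. simpl in Hx. change (Rabs (x - z) < Rmin e (/ (2 * (Rabs M + 1)))) in Hx.
  apply HM. rewrite Rabs_right in Hx by lra.
  assert (H1 : x - z < e) by (eapply Rlt_le_trans; [exact Hx| apply Rmin_l]).
  assert (H2 : x - z < / (2 * (Rabs M + 1))) by (eapply Rlt_le_trans; [exact Hx| apply Rmin_r]).
  destruct (H x) as [_ H3]. rewrite Rabs_right by lra. lra.
  pose proof (Rabs_pos M). pose proof (Rle_abs M).
  assert (K4 : (x - z) * (2 * (Rabs M + 1)) < 1).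
  { apply (Rmult_lt_compat_r (2 * (Rabs M + 1))) in H2; [|lra].
    rewrite Rinv_l in H2 by lra. exact H2. }
  destruct (Rle_or_lt (hf f x) (Rabs M + 1)); [|lra].
  assert ((Rabs M + 1 - hf f x) * (x - z) >= 0) by (apply Rle_ge, Rmult_le_pos; lra).
  nra.
Qed.

Lemma lim_left f z : isC2 f -> f z = 0 -> Derive f z <> 0 ->
  filterlim (hf f) (at_left z) (Rbar_locally m_infty).
Proof.
  intros Hf Hz Hd. destruct (local_zero f z Hf Hz Hd) as [e [He H]].
  intros P [M HM].
  assert (Hr : 0 < Rmin e (/ (2 * (Rabs M + 1)))).
  { apply Rmin_pos; auto. apply Rinv_0_lt_compat. pose proof (Rabs_pos M); lra. }
  exists (mkposreal _ Hr). intros x Hx Hzx. simpl in Hx. change (Rabs (x - z) < Rmin e (/ (2 * (Rabs M + 1)))) in Hx.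
  apply HM. rewrite Rabs_left in Hx by lra.
  assert (H1 : -(x - z) < e) by (eapply Rlt_le_trans; [exact Hx| apply Rmin_l]).
  assert (H2 : -(x - z) < / (2 * (Rabs M + 1))) by (eapply Rlt_le_trans; [exact Hx| apply Rmin_r]).
  destruct (H x) as [_ H3]. rewrite Rabs_left by lra. lra.
  pose proof (Rabs_pos M). pose proof (Rle_abs M). pose proof (Rle_abs (-M)). rewrite Rabs_Ropp in *.
  assert (K4 : -(x - z) * (2 * (Rabs M + 1)) < 1).
  { apply (Rmult_lt_compat_r (2 * (Rabs M + 1))) in H2; [|lra].
    rewrite Rinv_l in H2 by lra. exact H2. }
  destruct (Rle_or_lt (-(Rabs M + 1)) (hf f x)); [|lra].
  assert ((hf f x + (Rabs M + 1)) * (-(x - z)) >= 0) by (apply Rle_ge, Rmult_le_pos; lra).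
  nra.
Qed.

Lemma prod_mid a b (P : R * R -> Prop) : a < b ->
  (forall u v, a < u < (a+b)/2 -> (a+b)/2 < v < b -> P (u, v)) ->
  filter_prod (at_right a) (at_left b) P.
Proof.
  intros Hab H.
  assert (Hr : 0 < (b - a)/2) by lra.
  apply Filter_prod with (fun u => a < u < (a+b)/2) (fun v => (a+b)/2 < v < b).
  - exists (mkposreal _ Hr). intros y Hy Hay. simpl in Hy. change (Rabs (y - a) < (b-a)/2) in Hy.
    apply Rabs_def2 in Hy. lra.
  - exists (mkposreal _ Hr). intros y Hy Hay. simpl in Hy. change (Rabs (y - b) < (b-a)/2) in Hy.
    apply Rabs_def2 in Hy. lra.
  - intros u v Hu Hv. apply H; auto.
Qed.

Lemma arc_integral G f a b : isC1 G -> is_lim G m_infty (-1) -> is_lim G p_infty 1 -> isC2 f ->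
  a < b -> f a = 0 -> f b = 0 -> Derive f a <> 0 -> Derive f b <> 0 ->
  (forall x, a < x < b -> f x <> 0) ->
  is_RInt_gen (integrand G f) (at_right a) (at_left b) (-2).
Proof.
  intros HG Hm Hp Hf Hab Ha Hb Hda Hdb Hnz.
  apply (is_RInt_gen_ext (Derive (fun y => G (hf f y)))).
  { apply prod_mid; auto. intros u v Hu Hv x Hx. simpl in Hx.
    rewrite Rmin_left, Rmax_right in Hx by lra.
    apply is_derive_unique, comp_derive; auto. apply Hnz; lra. }
  replace (-2) with (-1 - 1) by ring.
  apply is_RInt_gen_Derive.
  - apply prod_mid; auto. intros u v Hu Hv x Hx. simpl in Hx.
    rewrite Rmin_left, Rmax_right in Hx by lra.
    eexists. apply comp_derive; auto. apply Hnz; lra.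
  - apply prod_mid; auto. intros u v Hu Hv x Hx. simpl in Hx.
    rewrite Rmin_left, Rmax_right in Hx by lra.
    assert (Hx0 : f x <> 0) by (apply Hnz; lra).
    apply continuous_ext_loc with (integrand G f).
    + eapply filter_imp. 2: apply (nz_loc f x Hf Hx0).
      intros y Hy. symmetry. apply is_derive_unique, comp_derive; auto.
    + apply integrand_cont; auto.
  - eapply filterlim_comp. apply lim_right; auto. exact Hp.
  - eapply filterlim_comp. apply lim_left; auto. exact Hm.
Qed.

Lemma separation f : isC2 f -> nondegenerate f ->
  exists d, 0 < d /\ forall x y, 0 <= x <= 2*PI -> 0 <= y <= 2*PI -> f x = 0 -> f y = 0 ->
    Rabs (x - y) < d -> x = y.
Proof.
  intros Hf [c [Hc Hnd]].
  assert (Hc2 : 0 < c/2) by lra.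
  assert (HH : forall t, (fun t => 0 <= t <= 2*PI) t -> continuity_pt (Derive f) t).
  { intros t _. apply continuity_pt_filterlim. apply C2_cont1, Hf. }
  destruct (Heine (Derive f) (fun t => 0 <= t <= 2*PI) (compact_P3 0 (2*PI)) HH (mkposreal _ Hc2)) as [d Hd].
  exists d. split. apply cond_pos.
  assert (K : forall x y, 0 <= x <= 2*PI -> 0 <= y <= 2*PI -> f x = 0 -> f y = 0 ->
    Rabs (x - y) < d -> x <= y -> x = y).
  { intros x y Hx Hy Fx Fy Hxy Hle.
    destruct (Rle_lt_or_eq_dec _ _ Hle) as [Hlt|]; auto. exfalso.
    destruct (MVT_gen f x y (Derive f)) as [xi [Hxi Hmvt]].
    { intros t _. apply Derive_correct. apply Hf. }
    { intros t _. apply continuity_pt_filterlim. apply C2_cont, Hf. }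
    rewrite Rmin_left, Rmax_right in Hxi by lra.
    rewrite Fx, Fy in Hmvt.
    pose proof (zero_deriv_bound f c x Hnd Fx) as Bx.
    assert (B : Rabs (Derive f x - Derive f xi) < c/2).
    { apply (Hd x xi); try lra. apply Rabs_def2 in Hxy. apply Rabs_def1; lra. }
    assert (Derive f xi <> 0).
    { intro E. rewrite E, Rminus_0_r in B. lra. }
    symmetry in Hmvt. rewrite Rminus_0_r in Hmvt. apply Rmult_integral in Hmvt. destruct Hmvt; [auto|lra]. }
  intros x y Hx Hy Fx Fy Hxy. destruct (Rle_or_lt x y).
  - apply K; auto.
  - symmetry. apply K; auto. rewrite Rabs_minus_sym; auto. lra.
Qed.

Lemma build_list f d : 0 < d ->
  (forall x y, 0 <= x <= 2*PI -> 0 <= y <= 2*PI -> f x = 0 -> f y = 0 -> Rabs (x - y) < d -> x = y) ->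
  forall e, 0 < e <= d -> forall k t, exists l, Sorted Rlt l /\
    (forall x, In x l <-> (t <= x < t + INR k * e /\ 0 <= x < 2 * PI /\ f x = 0)) /\
    List.Forall (fun x => t <= x) l.
Proof.
  intros Hd Hsep e He k. induction k as [|k IH]; intros t.
  - exists nil. split. constructor. split. intros x. simpl. split. tauto. lra. constructor.
  - destruct (IH (t + e)) as [l [Hs [Hin Hf]]]. pose proof (pos_INR k) as Hk.
    destruct (classic (exists z, t <= z < t + e /\ 0 <= z < 2*PI /\ f z = 0)) as [[z Hz]|Hno].
    + exists (z :: l). split; [|split].
      * constructor; auto. destruct l as [|y l']; constructor.
        inversion Hf; subst. lra.
      * intros x. rewrite S_INR. simpl. split.
        -- intros [<-|Hx]. nra. apply Hin in Hx. destruct Hx as (? & ? & ?); repeat split; auto; nra.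
        -- intros Hx. destruct (Rlt_or_le x (t + e)).
           ++ left. apply Hsep; try lra. apply Rabs_def1; lra.
           ++ right. apply Hin. destruct Hx as (? & ? & ?); repeat split; auto; nra.
      * constructor. lra. eapply List.Forall_impl; [|exact Hf]. simpl. intros; lra.
    + exists l. split; [auto|split].
      * intros x. rewrite S_INR. split.
        -- intros Hx. apply Hin in Hx. destruct Hx as (? & ? & ?); repeat split; auto; nra.
        -- intros Hx. apply Hin. destruct (Rlt_or_le x (t + e)).
           ++ exfalso. apply Hno. exists x. lra.
           ++ destruct Hx as (? & ? & ?); repeat split; auto; nra.
      * eapply List.Forall_impl; [|exact Hf]. simpl. intros; lra.
Qed.

Lemma zeros_exist f : isC2 f -> nondegenerate f -> exists zs, zeros_list f zs.
Proof.
  intros Hf Hnd. destruct (separation f Hf Hnd) as [d [Hd Hsep]].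
  pose proof PI_RGT_0 as Hpi.
  destruct (INR_unbounded (2*PI/d)) as [n Hn].
  assert (H0 : 0 < 2*PI/d) by (apply Rdiv_lt_0_compat; lra).
  assert (Hn0 : 0 < INR n) by lra.
  assert (He : 0 < 2*PI/INR n <= d).
  { split. apply Rdiv_lt_0_compat; lra.
    apply Rmult_gt_compat_r with (r := d) in Hn; [|lra].
    unfold Rdiv in *. rewrite Rmult_assoc, Rinv_l, Rmult_1_r in Hn by lra.
    apply Rlt_le. apply Rmult_lt_reg_r with (INR n); auto.
    rewrite Rmult_assoc, Rinv_l, Rmult_1_r by lra. lra. }
  destruct (build_list f d Hd (fun x y Hx Hy => Hsep x y Hx Hy) _ He n 0) as [l [Hs [Hin _]]].
  exists l. split; auto. intros x. rewrite Hin.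
  replace (0 + INR n * (2 * PI / INR n)) with (2*PI) by (field; lra). tauto.
Qed.

Lemma last_cons (l : list R) b z : last (b :: l) z = last l b.
Proof.
  revert b z; induction l as [|c l IH]; intros b z. reflexivity.
  change (last (c :: l) z = last (c :: l) b). rewrite !IH. reflexivity.
Qed.

Lemma last_in (l : list R) z : In (last l z) (z :: l).
Proof.
  revert z; induction l as [|b l IH]; intros z. simpl; auto.
  rewrite last_cons. right. apply IH.
Qed.

Lemma last_max l z : Sorted Rlt (z :: l) -> forall y, In y (z :: l) -> y <= last l z.
Proof.
  revert z; induction l as [|b l IH]; intros z Hs y Hy; try rewrite last_cons; simpl in *.
  - destruct Hy as [<-|[]]. lra.
  - inversion Hs; subst. inversion H2; subst.
    destruct Hy as [<-|Hy].
    + assert (b <= last l b) by (apply IH; simpl; auto). lra.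
    + apply IH; auto.
Qed.

Lemma head_min l z : Sorted Rlt (z :: l) -> forall y, In y (z :: l) -> z <= y.
Proof.
  intros Hs y Hy. apply Sorted_extends in Hs. 2: (intros a b c; lra).
  destruct Hy as [<-|Hy]. lra.
  rewrite List.Forall_forall in Hs. apply Rlt_le, Hs; auto.
Qed.

Lemma consec_prop l z : Sorted Rlt (z :: l) -> forall a b, In (a, b) (consec z l) ->
  a < b /\ In a (z :: l) /\ In b (z :: l) /\ forall y, In y (z :: l) -> ~ (a < y < b).
Proof.
  revert z; induction l as [|c l IH]; intros z Hs a b Hab; simpl in Hab. contradiction.
  destruct Hab as [E|Hab].
  - inversion E; subst. inversion Hs; subst. inversion H2; subst.
    split; [lra|split; [simpl; auto|split; [simpl; auto|]]].
    intros y Hy. destruct Hy as [<-|[<-|Hy]]; try lra.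
    pose proof (head_min l b H1 y (or_intror Hy)). 
    assert (b <> y). { intro; subst. apply Sorted_extends in H1. 2:(intros u v w; lra).
      rewrite List.Forall_forall in H1. specialize (H1 y Hy). lra. }
    lra.
  - inversion Hs; subst. inversion H2; subst.
    destruct (IH c H1 a b Hab) as (Hlt & Ha & Hb & Hn).
    split; auto. split; [right; auto|split; [right; auto|]].
    intros y [<-|Hy]; auto.
    pose proof (head_min l c H1 a Ha). lra.
Qed.

Lemma sum_const (L : list (R * R)) : fold_right Rplus 0 (map (fun _ => -2) L) = -2 * INR (length L).
Proof.
  induction L as [|p L IH]. simpl. ring. simpl map. simpl fold_right. rewrite IH. change (length (p :: L)) with (S (length L)). rewrite S_INR. ring.
Qed.

Lemma consec_len l z : length (consec z l) = length l.
Proof. revert z; induction l; intros; simpl; auto. Qed.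

Lemma forall2_map (P : R * R -> R -> Prop) (L : list (R * R)) g :
  (forall p, In p L -> P p (g p)) -> Forall2 P L (map g L).
Proof.
  induction L; intros H; simpl; constructor. apply H; simpl; auto.
  apply IHL. intros; apply H; simpl; auto.
Qed.

Lemma derive_periodic f x : isC2 f -> periodic2pi f -> Derive f (x + 2*PI) = Derive f x.
Proof.
  intros Hf Hp.
  rewrite <- (Derive_ext (fun y => f (y + 2*PI)) f x (fun t => Hp t)).
  symmetry. apply is_derive_unique.
  replace (Derive f (x + 2*PI)) with (scal 1 (Derive f (x + 2*PI))) by (exact (@scal_one R_AbsRing R_NormedModule _)).
  apply (@is_derive_comp R_AbsRing R_NormedModule f (fun y => y + 2*PI) x).
  apply Derive_correct, Hf.
  auto_derive; auto.
Qed.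

Theorem proposition2 (G f : R -> R) :
  isC1 G ->
  is_lim G m_infty (-1) ->
  is_lim G p_infty 1 ->
  isC2 f -> periodic2pi f -> nondegenerate f ->
  exists (zs : list R) (I : R),
    zeros_list f zs /\
    is_arc_integral (integrand G f) zs I /\
    INR (length zs) = - (1 / 2) * I.
Proof.
  intros HG Hm Hp Hf Hper Hnd.
  destruct (zeros_exist f Hf Hnd) as [zs Hzs].
  pose proof PI_RGT_0 as Hpi.
  assert (Hdz : forall z, f z = 0 -> Derive f z <> 0).
  { intros z Hz E. destruct Hnd as [c [Hc Hn]].
    pose proof (zero_deriv_bound f c z Hn Hz). rewrite E, Rabs_R0 in H. lra. }
  destruct Hzs as [Hs Hin].
  destruct zs as [|z l].
  - exists nil, 0. split. split; auto. split.
    2: simpl; ring.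
    simpl.
    assert (Hnz : forall x, 0 <= x <= 2*PI -> f x <> 0).
    { intros x Hx E. destruct (Rle_lt_or_eq_dec _ _ (proj2 Hx)) as [Hlt|Heq].
      - apply (proj2 (Hin x)). split; [lra|auto].
      - apply (proj2 (Hin 0)). split; [lra|]. subst x.
        rewrite <- (Hper 0). rewrite Rplus_0_l. auto. }
    assert (E0 : 0 = minus (G (hf f (2*PI))) (G (hf f 0))).
    { unfold hf. replace (2*PI) with (0 + 2*PI) by ring.
      rewrite derive_periodic, Hper by auto. change (minus ?a ?b) with (a - b). ring. }
    assert (Hi : is_RInt (integrand G f) 0 (2*PI) (minus (G (hf f (2*PI))) (G (hf f 0)))).
    2: { rewrite <- E0 in Hi. exact Hi. }
    apply (is_RInt_derive (fun y => G (hf f y))).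
    + intros x Hx. rewrite Rmin_left, Rmax_right in Hx by lra.
      apply comp_derive; auto.
    + intros x Hx. rewrite Rmin_left, Rmax_right in Hx by lra.
      apply integrand_cont; auto.
  - exists (z :: l), (-2 * INR (length (z :: l))). split. split; auto.
    split. 2: field.
    exists (map (fun _ => -2) (arcs (z :: l))). split.
    2: { rewrite sum_const. unfold arcs. rewrite length_app, consec_len. simpl.
         rewrite Nat.add_1_r. reflexivity. }
    apply forall2_map. intros [a b] Hab. simpl fst; simpl snd.
    assert (Hz0 : 0 <= z < 2*PI /\ f z = 0) by (apply Hin; simpl; auto).
    unfold arcs in Hab. apply in_app_or in Hab. destruct Hab as [Hab|Hab].
    + destruct (consec_prop l z Hs a b Hab) as (Hlt & Ha & Hb & Hn).
      apply Hin in Ha. apply Hin in Hb.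
      apply arc_integral; auto; try tauto. apply Hdz; tauto. apply Hdz; tauto.
      intros x Hx Ex. apply (Hn x); auto. apply Hin. split; [lra|auto].
    + destruct Hab as [Eab|[]]. inversion Eab; subst a b.
      pose proof (last_in l z) as Hl. pose proof (last_max l z Hs) as Hmax.
      pose proof (head_min l z Hs) as Hmin.
      apply Hin in Hl.
      assert (Fz : f (z + 2*PI) = 0) by (rewrite Hper; tauto).
      apply arc_integral; auto; try tauto. lra. apply Hdz; tauto.
      intros x Hx Ex.
      destruct (Rlt_or_le x (2*PI)).
      * assert (In x (z :: l)) by (apply Hin; split; [lra|auto]).
        specialize (Hmax x H0). lra.
      * assert (In (x - 2*PI) (z :: l)).
        { apply Hin. split. lra. rewrite <- Hper. replace (x - 2*PI + 2*PI) with x by ring. auto. }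
        specialize (Hmin _ H0). lra.
Qed.
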